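(* For every $r\ge2$, every eigenvalue $\lambda$ of $M^{(r)}_{++}$, $M^{(r)}_{+-}$ or $M^{(r)}_{--}$, and for every $r\ge0$ every eigenvalue $\lambda$ of $M^{(r)}_{-+}$, satisfies either $\lambda=0$ or $\lambda>\frac32-\sqrt2$ (all these eigenvalues are real).
   Context: Matrices: for $r\ge2$, $M^{(r)}_{++}=M^{(r)}_{+-}$ is the $r\times r$ tridiagonal matrix with first row $(\tfrac12,-1,0,\dots,0)$, rows $i=2,\dots,r-1$ having entries $-\tfrac12,\tfrac32,-1$ in columns $i-1,i,i+1$ (zeros elsewhere), and last row $(0,\dots,0,-1,2)$; $M^{(r)}_{--}$ is identical except that its first row is $(\tfrac32,-1,0,\dots,0)$. $M^{(0)}_{-+}=(1)$, and for $r\ge1$, $M^{(r)}_{-+}$ is the $(r+1)\times(r+1)$ tridiagonal matrix with first row $(1,-2,0,\dots,0)$, rows $i=2,\dots,r$ having entries $-\tfrac12,\tfrac32,-1$ in columns $i-1,i,i+1$, and last row $(0,\dots,0,-1,2)$. For example $M^{(2)}_{++}=\begin{pmatrix}\frac12&-1\\-1&2\end{pmatrix}$, $M^{(2)}_{--}=\begin{pmatrix}\frac32&-1\\-1&2\end{pmatrix}$, $M^{(1)}_{-+}=\begin{pmatrix}1&-2\\-1&2\end{pmatrix}$. *)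

(* Defs.v *)
(* Matrices are taken over algC (algebraic complex numbers),
   an algebraically closed field containing all eigenvalues of these rational matrices. *)
From HB Require Import structures.
From mathcomp Require Import all_boot all_order all_algebra all_field.
Set Implicit Arguments. Unset Strict Implicit. Unset Printing Implicit Defensive.
Import Order.TTheory GRing.Theory Num.Theory.
Local Open Scope ring_scope.

(* Row 0 takes precedence over the last row. *)
Definition tri_entry (a0 b0 : algC) (n i j : nat) : algC :=
  if i == 0%N then (if j == 0%N then a0 else if j == 1%N then b0 else 0)
  else if i == n.-1 then (if j == i.-1 then -1 else if j == i then 2 else 0)
  else (if j == i.-1 then - (1/2) else if j == i then 3/2
        else if j == i.+1 then -1 else 0).

(* M^(r)_{++}, meaningful for r >= 2 *)
Definition M_pp (r : nat) : 'M[algC]_r :=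
  \matrix_(i < r, j < r) tri_entry (1/2) (-1) r i j.
Definition M_pm (r : nat) : 'M[algC]_r := M_pp r.
(* M^(r)_{--}, meaningful for r >= 2 *)
Definition M_mm (r : nat) : 'M[algC]_r :=
  \matrix_(i < r, j < r) tri_entry (3/2) (-1) r i j.
(* M^(r)_{-+}, of size r+1; for r = 0 this is the 1x1 matrix (1). *)
Definition M_mp (r : nat) : 'M[algC]_(r.+1) :=
  \matrix_(i < r.+1, j < r.+1) tri_entry 1 (-2) r.+1 i j.

(* Main.v *)
Require Import Defs.
From HB Require Import structures.
From mathcomp Require Import all_boot all_order all_algebra all_field.
From mathcomp Require Import ring zify.
Import Order.TTheory GRing.Theory Num.Theory.
Local Open Scope ring_scope.

Definition Lc (n i : nat) : algC := if i == 0%N then 0 else if i == n.-1 then -1 else -(1/2).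
Definition Dc (a0 : algC) (n i : nat) : algC := if i == 0%N then a0 else if i == n.-1 then 2 else 3/2.
Definition Uc (b0 : algC) (n i : nat) : algC := if i == 0%N then b0 else if i == n.-1 then 0 else -1.

Lemma tri_decomp a0 b0 n i j : tri_entry a0 b0 n i j =
  (if j.+1 == i then Lc n i else 0) + (if j == i then Dc a0 n i else 0)
  + (if j == i.+1 then Uc b0 n i else 0).
Proof.
rewrite /tri_entry /Lc /Dc /Uc.
repeat (case: ifP => /eqP ?; try lia); rewrite ?addr0 ?add0r //.
Qed.

Lemma right_eig n (M : 'M[algC]_n) l : eigenvalue M l ->
  exists2 x : 'cV_n, x != 0 & M *m x = l *: x.
Proof.
move/eigenvalueP=> [v vM vnz].
have: \det (M - l%:M) == 0.
  by apply/det0P; exists v => //; rewrite mulmxBr vM mul_mx_scalar subrr.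
rewrite -det_tr => /det0P [w wnz].
rewrite linearB /= tr_scalar_mx mulmxBr mul_mx_scalar => /eqP; rewrite subr_eq0 => /eqP H.
exists w^T; first by rewrite trmx_eq0.
by rewrite -[M]trmxK -trmx_mul H linearZ.
Qed.

Lemma sum_delta n (F : nat -> algC) k :
  \sum_(j < n) (if (j : nat) == k then F j else 0) = if (k < n)%N then F k else 0.
Proof.
elim: n => [|n IH]; first by rewrite big_ord0.
rewrite big_ord_recr /= IH ltnS.
by case: (ltngtP k n) => H; rewrite ?addr0 ?add0r // H.
Qed.

Lemma sum_delta_mul n c (X : nat -> algC) k : (forall k, (n <= k)%N -> X k = 0) ->
  \sum_(j < n) (if (j : nat) == k then c else 0) * X j = c * X k.
Proof.
move=> HX.
rewrite (eq_bigr (fun j : 'I_n => if (j : nat) == k then c * X j else 0)).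
  rewrite (sum_delta n (fun j => c * X j)); case: ltnP => // kn; by rewrite HX ?mulr0.
by move=> j _; case: ifP; rewrite ?mul0r.
Qed.

Lemma row_sum a0 b0 n (X : nat -> algC) i : (forall k, (n <= k)%N -> X k = 0) ->
  \sum_(j < n) tri_entry a0 b0 n i j * X j =
  Lc n i * X i.-1 + Dc a0 n i * X i + Uc b0 n i * X i.+1.
Proof.
move=> HX.
under eq_bigr do rewrite tri_decomp !mulrDl.
rewrite !big_split /= !sum_delta_mul //.
case: i => [|i]; last first.
  by under eq_bigr do rewrite eqSS; rewrite sum_delta_mul.
by rewrite big1 ?add0r /Lc ?mul0r ?add0r // => j _; rewrite mul0r.
Qed.

Lemma eig_seq a0 b0 n l :
  eigenvalue (\matrix_(i < n, j < n) tri_entry a0 b0 n i j) l ->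
  exists X : nat -> algC, [/\ forall k, (n <= k)%N -> X k = 0,
   exists2 i, (i < n)%N & X i != 0 &
   forall i, (i < n)%N -> Lc n i * X i.-1 + Dc a0 n i * X i + Uc b0 n i * X i.+1 = l * X i].
Proof.
move/right_eig=> [x xnz Hx].
pose X k := \sum_(j < n) (if (j : nat) == k then x j 0 else 0).
have Xval (j : 'I_n) : X j = x j 0.
  rewrite /X (bigD1 j) //= eqxx big1 ?addr0 // => i ij.
  by rewrite val_eqE (negbTE ij).
have X0 k : (n <= k)%N -> X k = 0.
  move=> kn; rewrite /X big1 // => j _.
  by rewrite ltn_eqF // (leq_trans (ltn_ord j)).
exists X; split => //.
  case: (pickP (fun j : 'I_n => x j 0 != 0)) => [j Hj | H].
    by exists j => //; rewrite Xval.
  case/negP: xnz; apply/eqP/matrixP => i k; rewrite ord1 mxE.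
  by move: (H i) => /= /negbFE/eqP.
move=> i Hi.
have := congr1 (fun A : 'cV_n => A (Ordinal Hi) 0) Hx; rewrite !mxE /=.
under eq_bigr do rewrite mxE -Xval.
by rewrite row_sum // -(Xval (Ordinal Hi)).
Qed.

Lemma key (s p q g : algC) : 0 < s -> s * s = 2 -> 0 <= p -> 0 <= q ->
  g * g = p * q / 2 -> s * p < 2 * g -> 2 * g < s * q.
Proof.
move=> s0 ss p0 q0 gg H.
have A0 : 0 <= s * p by rewrite mulr_ge0 // ltW.
have B0 : 0 <= s * q by rewrite mulr_ge0 // ltW.
have C0 : 0 < 2 * g := le_lt_trans A0 H.
have CC : (2 * g) * (2 * g) = (s * p) * (s * q).
  rewrite (_ : s * p * (s * q) = (s * s) * (p * q)); last by ring.
  rewrite ss (_ : p * q = 2 * (g * g)); first by ring.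
  by rewrite gg; field.
move: CC H A0 B0 C0; set A := s * p; set B := s * q; set C := 2 * g => CC H A0 B0 C0.
have Br : B \is Num.real := ger0_real B0.
have Cr : C \is Num.real := gtr0_real C0.
rewrite real_ltNge //; apply/negP => BC.
have Bpos : 0 < B.
  rewrite lt0r B0 andbT; apply/negP => /eqP B00.
  move: CC; rewrite B00 mulr0 => /eqP; rewrite mulf_eq0 orbb => /eqP C00.
  by rewrite C00 ltxx in C0.
have : A * B < C * C.
  apply: (@lt_le_trans _ _ (C * B)); first by rewrite ltr_pM2r.
  by rewrite ler_pM2l.
by rewrite CC ltxx.
Qed.

Lemma conj32 : (3 / 2 : algC)^* = 3 / 2.
Proof. by rewrite conj_Creal // ger0_real // divr_ge0 ?ler0n. Qed.

Lemma core n (a l e lam : algC) (y : nat -> algC) :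
  a \is Num.real -> 3/2 <= a -> 0 < l -> e \is Num.real ->
  sqrtC 2 * l <= e - 3/2 + sqrtC 2 ->
  a * y 0%N - y 1%N = lam * y 0%N ->
  (forall i, (1 <= i <= n)%N -> -(1/2) * y i.-1 + 3/2 * y i - y i.+1 = lam * y i) ->
  - l * y n + e * y n.+1 = lam * y n.+1 ->
  (exists2 i, (i < n.+2)%N & y i != 0) ->
  lam \is Num.real /\ 3/2 - sqrtC 2 < lam.
Proof.
move=> ar a32 l0 er hel E0 Ei El [i0 Hi0 yi0].
set s := sqrtC 2.
have s_gt0 : 0 < s by rewrite sqrtC_gt0 ltr0n.
have ss : s * s = 2 by rewrite -expr2 sqrtCK.
have s_real : s \is Num.real by apply: gtr0_real.
have E0' : y 1%N = (a - lam) * y 0%N by rewrite mulrBl -E0; ring.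
have Ei' i : (1 <= i <= n)%N -> y i.+1 = (3/2 - lam) * y i - 1/2 * y i.-1.
  by move=> /Ei H; rewrite mulrBl -H; ring.
have El' : l * y n = (e - lam) * y n.+1 by rewrite mulrBl -El; ring.
have y0nz : y 0%N != 0.
  apply/negP => /eqP y00.
  have Z k : (k <= n)%N -> y k = 0 /\ y k.+1 = 0.
    elim: k => [|k IH] Hk; first by rewrite E0' y00 mulr0.
    have [H1 H2] := IH (ltnW Hk); split => //.
    rewrite Ei'; last by lia.
    by rewrite /= H1 H2 !mulr0 subrr.
  move: yi0; case: i0 Hi0 => [|i] Hi; first by rewrite y00 eqxx.
  have Hi' : (i <= n)%N by lia.
  by case: (Z i Hi') => _ ->; rewrite eqxx.
pose P := fun k => (2 ^ k)%:R * (y k * (y k)^*).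
pose G := fun k => (2 ^ k)%:R * ((y k)^* * y k.+1).
have P_ge0 k : 0 <= P k by rewrite mulr_ge0 ?ler0n ?mul_conjC_ge0.
have P0_gt0 : 0 < P 0%N by rewrite /P expn0 mul1r mul_conjC_gt0.
have Pc k : (P k)^* = P k by rewrite conj_Creal // ger0_real.
have Gc k : (G k)^* = (2 ^ k)%:R * (y k * (y k.+1)^*).
  by rewrite /G !rmorphM /= conjC_nat conjCK.
have G0 : G 0%N = (a - lam) * P 0%N by rewrite /G /P E0' expn0; ring.
have Grec k : (k.+1 <= n)%N -> G k.+1 = (3/2 - lam) * P k.+1 - (G k)^*.
  move=> Hk; have Hk' : (0 < k.+1 <= n)%N by lia.
  rewrite Gc /G /P (Ei' k.+1 Hk') /= expnS natrM; by field.
have Gend : l * (G n)^* = (e - lam) * P n.+1 / 2.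
  have -> : l * (G n)^* = (2 ^ n)%:R * (l * y n) * (y n.+1)^* by rewrite Gc; ring.
  by rewrite El' /P expnS natrM; field.
have GG j : G j * (G j)^* = P j * P j.+1 / 2.
  by rewrite Gc /G /P expnS natrM; field.
have Re_claim j : (j <= n)%N ->
    exists2 t, P 0%N <= t & G j - (G j)^* = (lam^* - lam) * t.
  elim: j => [|j IH] Hj.
    exists (P 0%N) => //.
    rewrite G0 rmorphM /= rmorphB /= (conj_Creal ar) Pc; ring.
  have [t Ht Htt] := IH (ltnW Hj).
  exists (t + P j.+1); first by rewrite (le_trans Ht) // lerDl.
  have Grc : (G j.+1)^* = (3/2 - lam^*) * P j.+1 - G j.
    by rewrite (Grec j Hj) rmorphB rmorphM /= rmorphB /= conjCK Pc conj32.
  rewrite Grc (Grec j Hj) mulrDr -Htt; ring.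
have lam_real : lam \is Num.real.
  have [t Ht Htt] := Re_claim n (leqnn n).
  have HlG : l * G n = (e - lam^*) * P n.+1 / 2.
    have := congr1 (@Num.conj _) Gend.
    rewrite !rmorphM /= conjCK (conj_Creal (gtr0_real l0)) rmorphB /= (conj_Creal er).
    rewrite !conjCK !conjC_nat fmorphV /= conjC_nat => H.
    by rewrite /G H /P; ring.
  have Hz : (lam^* - lam) * (l * t + P n.+1 / 2) = 0.
    have -> : (lam^* - lam) * (l * t + P n.+1 / 2) =
      l * ((lam^* - lam) * t) + (lam^* - lam) * P n.+1 / 2 by ring.
    rewrite -Htt mulrBr HlG Gend; ring.
  have pos : 0 < l * t + P n.+1 / 2.
    apply: ltr_wpDr; first by rewrite divr_ge0 ?ler0n.
    by rewrite mulr_gt0 // (lt_le_trans P0_gt0 Ht).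
  move/eqP: Hz; rewrite mulf_eq0 (gt_eqF pos) orbF subr_eq0 => /eqP H.
  by apply/CrealP.
split => //.
have Gr j : (j <= n)%N -> (G j)^* = G j.
  move=> Hj; have [t _ Htt] := Re_claim j Hj.
  move: Htt; rewrite (conj_Creal lam_real) subrr mul0r => /eqP; rewrite subr_eq0 => /eqP H.
  by rewrite -H.
have c_real : 3/2 - s \is Num.real.
  by rewrite realB // ger0_real // divr_ge0 ?ler0n.
rewrite real_ltNge //; apply/negP => Hle.
have hs : s <= 3/2 - lam.
  by rewrite -subr_ge0 (_ : 3/2 - lam - s = 3/2 - s - lam); [rewrite subr_ge0 | ring].
have inv j : (j <= n)%N -> s * P j < 2 * G j.
  elim: j => [|j IH] Hj.
    rewrite G0 (mulrA 2) ltr_pM2r //.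
    have h1 : s <= a - lam by rewrite (le_trans hs) // lerD2r.
    rewrite -subr_gt0 (_ : 2 * (a - lam) - s = s + 2 * ((a - lam) - s)); last by ring.
    by apply: ltr_wpDr; [rewrite mulr_ge0 ?ler0n // subr_ge0 | exact: s_gt0].
  have K := @key s (P j) (P j.+1) (G j) s_gt0 ss (P_ge0 j) (P_ge0 j.+1) _ (IH (ltnW Hj)).
  rewrite (Grec j Hj) (Gr j (ltnW Hj)).
  rewrite -subr_gt0 (_ : 2 * ((3/2 - lam) * P j.+1 - G j) - s * P j.+1 =
     (s * P j.+1 - 2 * G j) + 2 * ((3/2 - lam) - s) * P j.+1); last by ring.
  apply: ltr_wpDr; first by rewrite mulr_ge0 // mulr_ge0 ?ler0n // subr_ge0.
  rewrite subr_gt0; apply: K; rewrite -{2}(Gr j (ltnW Hj)); exact: GG.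
have K : 2 * G n < s * P n.+1.
  apply: (@key s (P n) (P n.+1) (G n) s_gt0 ss (P_ge0 n) (P_ge0 n.+1)); last exact: inv.
  by rewrite -{2}(Gr n (leqnn n)) GG.
have : s * P n.+1 <= 2 * G n.
  rewrite -(ler_pM2l l0).
  have -> : l * (2 * G n) = (e - lam) * P n.+1.
    rewrite -{1}(Gr n (leqnn n)) (_ : l * (2 * (G n)^*) = 2 * (l * (G n)^*)); last by ring.
    by rewrite Gend; field.
  rewrite mulrA (mulrC l) ler_wpM2r //.
  rewrite (le_trans hel) // (_ : e - 3/2 + s = e - (3/2 - s)); last by ring.
  by rewrite lerD2l lerN2.
move=> H; have := lt_le_trans K H; by rewrite ltxx.
Qed.

Lemma rows a0 b0 m lam :
  eigenvalue (\matrix_(i < m.+2, j < m.+2) tri_entry a0 b0 m.+2 i j) lam ->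
  exists X : nat -> algC, [/\ exists2 i, (i < m.+2)%N & X i != 0,
    a0 * X 0%N + b0 * X 1%N = lam * X 0%N,
    (forall i, (1 <= i <= m)%N -> -(1/2) * X i.-1 + 3/2 * X i - X i.+1 = lam * X i) &
    - X m + 2 * X m.+1 = lam * X m.+1].
Proof.
move/eig_seq => [X [_ nz Hrow]]; exists X; split => //.
- by have := Hrow 0%N isT; rewrite /Lc /Dc /Uc /= mul0r add0r.
- move=> i Hi; have := Hrow i (leq_trans (andP Hi).2 (leqnSn _)).
  rewrite /Lc /Dc /Uc /=.
  have -> : (i == 0%N) = false by lia.
  have -> : (i == m.+1) = false by lia.
  move=> <-; ring.
- have := Hrow m.+1 (leqnn _); rewrite /Lc /Dc /Uc /= eqxx => <-; ring.
Qed.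

Lemma sqrt2_facts : 0 < sqrtC 2 :> algC /\ sqrtC 2 \is @Num.real algC.
Proof. have h : 0 < sqrtC 2 :> algC by rewrite sqrtC_gt0 ltr0n. by split => //; apply: gtr0_real. Qed.

Lemma c_lt32 : 3/2 - sqrtC 2 < 3/2 :> algC.
Proof. by rewrite ltrBlDr ltrDl (proj1 sqrt2_facts). Qed.

Lemma defl m a0 b0 lam : a0 \is Num.real -> 1/2 <= a0 -> b0 = -2 * a0 -> lam != 0 ->
  eigenvalue (\matrix_(i < m.+2, j < m.+2) tri_entry a0 b0 m.+2 i j) lam ->
  lam \is Num.real /\ 3/2 - sqrtC 2 < lam.
Proof.
move=> ar a12 hb lnz /rows [X [[i0 Hi0 Xi0] R0 Rmid Rlast]].
pose u k := X k - 2 * X k.+1.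
have unz : exists2 i, (i < m.+1)%N & u i != 0.
  case: (pickP (fun i : 'I_m.+1 => u i != 0)) => [j Hj | H]; first by exists j.
  have uz k : (k <= m)%N -> X k = 2 * X k.+1.
    move=> Hk; have := H (Ordinal (Hk : (k < m.+1)%N)).
    by move=> /= /negbFE /eqP /eqP; rewrite subr_eq0 => /eqP.
  have Xl : X m.+1 = 0.
    move: Rlast; rewrite (uz m (leqnn m)) (_ : - (2 * X m.+1) + 2 * X m.+1 = 0); last by ring.
    by move/esym/eqP; rewrite mulf_eq0 (negbTE lnz) => /eqP.
  have Dz (dd : nat) : (dd <= m.+1)%N -> X (m.+1 - dd)%N = 0.
    elim: dd => [|dd IH] Hd; first by rewrite subn0.
    have e1 : (m.+1 - dd.+1 = m - dd)%N by lia.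
    have e2 : ((m - dd).+1 = m.+1 - dd)%N by lia.
    rewrite e1 uz; last by lia.
    by rewrite e2 IH ?mulr0 //; lia.
  have e3 : (i0 = m.+1 - (m.+1 - i0))%N by lia.
  by move: Xi0; rewrite e3 Dz ?eqxx //; lia.
destruct m as [|m'].
  have Hu : lam * u 0%N = (a0 + 2) * u 0%N.
    rewrite /u (_ : lam * (X 0%N - 2 * X 1%N) = lam * X 0%N - 2 * (lam * X 1%N)); last by ring.
    by rewrite -R0 -Rlast hb; ring.
  have [i Hi ui] := unz; have i0' : i = 0%N by lia.
  move: ui; rewrite i0' => ui.
  move/eqP: Hu; rewrite -subr_eq0 -mulrBl mulf_eq0 (negbTE ui) orbF subr_eq0 => /eqP ->.
  have h2 : 3/2 <= a0 + 2.
    by rewrite (_ : 3/2 = 1/2 + 1) ?lerD // ?ler1n //; field.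
  split; first by rewrite rpredD // ger0_real.
  exact: lt_le_trans c_lt32 h2.
apply: (@core m' (a0 + 1) (1/2) (5/2) lam u).
- by rewrite rpredD // real1.
- by rewrite (_ : 3/2 = 1/2 + 1) ?lerD //; field.
- by rewrite divr_gt0 ?ltr0n.
- by rewrite ger0_real // divr_ge0 ?ler0n.
- rewrite -subr_ge0 (_ : 5 / 2 - 3 / 2 + sqrtC 2 - sqrtC 2 * (1 / 2) = 1 + sqrtC 2 / 2); last by field.
  by rewrite addr_ge0 // divr_ge0 ?ler0n // ltW // (proj1 sqrt2_facts).
- have R1 := Rmid 1%N (isT : (1 <= 1 <= m'.+1)%N).
  rewrite /u (_ : lam * (X 0%N - 2 * X 1%N) = lam * X 0%N - 2 * (lam * X 1%N)); last by ring.
  by rewrite -R0 -R1 hb /=; field.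
- move=> [//|i] Hi.
  have Ra := Rmid i.+1 (ltac:(lia) : (1 <= i.+1 <= m'.+1)%N).
  have Rb := Rmid i.+2 (ltac:(lia) : (1 <= i.+2 <= m'.+1)%N).
  rewrite /u (_ : lam * (X i.+1 - 2 * X i.+2) = lam * X i.+1 - 2 * (lam * X i.+2)); last by ring.
  by rewrite -Ra -Rb /=; field.
- have Ra := Rmid m'.+1 (ltac:(lia) : (1 <= m'.+1 <= m'.+1)%N).
  rewrite /u (_ : lam * (X m'.+1 - 2 * X m'.+2) = lam * X m'.+1 - 2 * (lam * X m'.+2)); last by ring.
  by rewrite -Ra -Rlast /=; field.
- exact: unz.
Qed.

Lemma c_lt1 : 3/2 - sqrtC 2 < 1 :> algC.
Proof.
have s1 : 1 < sqrtC 2 :> algC.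
  by rewrite -{1}sqrtC1 ltr_sqrtC ?qualifE /= ?ler01 ?ler0n ?ltr1n.
rewrite -subr_gt0 (_ : 1 - (3 / 2 - sqrtC 2) = (sqrtC 2 - 1) + 1/2); last by field.
by apply: ltr_wpDr; [rewrite divr_ge0 ?ler0n ?ler01 | rewrite subr_gt0].
Qed.

Theorem mainTheorem13 :
  (forall (r : nat), (2 <= r)%N -> forall l : algC,
      (eigenvalue (M_pp r) l \/ eigenvalue (M_pm r) l \/ eigenvalue (M_mm r) l) ->
      l \is Num.real /\ (l = 0 \/ 3/2 - sqrtC 2 < l)) /\
  (forall (r : nat) (l : algC), eigenvalue (M_mp r) l ->
      l \is Num.real /\ (l = 0 \/ 3/2 - sqrtC 2 < l)).
Proof.
split.
  move=> r r2 l H.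
  have {}H : eigenvalue (M_pp r) l \/ eigenvalue (M_mm r) l.
    by case: H => [|[]]; auto.
  case: r r2 H => [|[|m]] // _ [] H.
    case: (eqVneq l 0) => [->|lnz]; first by split; [exact: real0 | left].
    have [Hr Hc] := @defl m (1/2) (-1) l (ger0_real (divr_ge0 ler01 (ler0n _ 2)))
      (lexx _) (ltac:(by field)) lnz H.
    by split; [|right].
  have [X [nz R0 Rmid Rlast]] := @rows _ _ _ _ H.
  have [Hr Hc] : l \is Num.real /\ 3/2 - sqrtC 2 < l; last by split; [|right].
  apply: (@core m (3/2) 1 2 l X (ger0_real (divr_ge0 (ler0n _ 3) (ler0n _ 2)))
    (lexx _) ltr01 (ger0_real (ler0n _ 2)) _ _ Rmid _ nz).
  - rewrite mulr1 -subr_ge0 (_ : 2 - 3 / 2 + sqrtC 2 - sqrtC 2 = 1/2); last by field.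
    by rewrite divr_ge0 ?ler01 ?ler0n.
  - by rewrite -R0 mulN1r.
  - by rewrite -Rlast mulN1r.
move=> r l H.
case: (eqVneq l 0) => [->|lnz]; first by split; [exact: real0 | left].
case: r H => [|m] H.
  have [X [X0 [i Hi Xi] Hrow]] := @eig_seq _ _ _ _ H.
  have i0 : i = 0%N by lia.
  move: Xi; rewrite i0 => Xi.
  have := Hrow 0%N isT; rewrite /Lc /Dc /Uc /= (X0 1%N) // mulr0 addr0 mul0r add0r mul1r.
  move/eqP; rewrite -{1}[X 0%N]mul1r -subr_eq0 -mulrBl mulf_eq0 (negbTE Xi) orbF subr_eq0.
  move/eqP <-; split; [exact: real1 | right; exact: c_lt1].
have h12 : 1 / 2 <= 1 :> algC.
  rewrite -subr_ge0 (_ : 1 - 1/2 = 1/2 :> algC); last by field.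
  by rewrite divr_ge0 ?ler01 ?ler0n.
have [Hr Hc] := @defl m 1 (-2) l (real1 _) h12 (ltac:(by rewrite mulr1)) lnz H.
by split; [|right].
Qed.
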